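(* Let $R$ be a domain and let $G$ be a finite undirected graph without loops with vertex set $A=\{a_1,\dots,a_n\}$, $n\geqslant 2$, such that the complement graph $\overline{G}$ is connected. Suppose the partially commutative metabelian Lie algebra $\mathcal{M}(A;G)=L_1\oplus L_2$ is a direct sum of two subalgebras such that for every $i\in\{1,\dots,n\}$ we have $(a_i)_1=a_i+g_i$ and $(a_i)_2=-g_i$ with $g_i\in\mathcal{M}(A;G)$ and $a_i\notin\mathrm{supp}(\omega_1(g_i))$. Then $g_i=0$ for all $i\in\{1,\dots,n\}$.
   Context: All Lie algebras are over the domain $R$. The complement graph $\overline{G}$ has vertex set $A$, with distinct vertices adjacent iff they are not adjacent in $G$. $\mathcal{M}(A;G)$ is the Lie $R$-algebra presented in the variety of metabelian Lie algebras (identity $[[x,y],[z,t]]=0$) by generators $A$ and relations $[a_p,a_q]=0$ for all edges $\{a_p,a_q\}$ of $G$. Since relations and identities are multi-homogeneous, every element $h$ is uniquely a sum of nonzero multi-homogeneous components (multi-degree of a Lie monomial = vector counting occurrences of each $a_p$). $\mathrm{supp}(h)$ is the set of $a_p$ occurring with nonzero exponent in the multi-degree of some component of $h$; $\omega_1(h)$ is the sum of the components of length $1$. A direct sum $L=L_1\oplus L_2$ of subalgebras means $L_1,L_2$ are subalgebras, $L=L_1\oplus L_2$ as $R$-modules and $[L_1,L_2]=0$; for $h\in L$, $(h)_1\in L_1$, $(h)_2\in L_2$ are the unique elements with $h=(h)_1+(h)_2$. *)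

(* Defs.v *)
From HB Require Import structures.
From mathcomp Require Import all_boot all_order all_algebra.
Set Implicit Arguments. Unset Strict Implicit. Unset Printing Implicit Defensive.
Import GRing.Theory.
Local Open Scope ring_scope.

Definition simple_graph (n : nat) (e : rel 'I_n) : Prop :=
  (forall i, ~~ e i i) /\ (forall i j, e i j = e j i).

Definition compl_graph (n : nat) (e : rel 'I_n) : rel 'I_n :=
  fun i j => (i != j) && ~~ e i j.

Definition compl_connected (n : nat) (e : rel 'I_n) : Prop :=
  forall i j : 'I_n, connect (compl_graph e) i j.

Definition bilinear_br (R : pzRingType) (V : lmodType R) (br : V -> V -> V) :=
  (forall (c : R) x y z, br (c *: x + y) z = c *: br x z + br y z) /\
  (forall (c : R) x y z, br z (c *: x + y) = c *: br z x + br z y).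

Definition metabelian_lie (R : pzRingType) (V : lmodType R) (br : V -> V -> V) :=
  bilinear_br br /\
  (forall x, br x x = 0) /\
  (forall x y z, br x (br y z) + br y (br z x) + br z (br x y) = 0) /\
  (forall x y z t, br (br x y) (br z t) = 0).

Definition lie_subalg (R : pzRingType) (V : lmodType R) (br : V -> V -> V)
    (P : V -> Prop) :=
  P 0 /\ (forall x y, P x -> P y -> P (x + y)) /\
  (forall (c : R) x, P x -> P (c *: x)) /\
  (forall x y, P x -> P y -> P (br x y)).

Definition lie_hom (R : pzRingType) (V W : lmodType R) (brV : V -> V -> V)
    (brW : W -> W -> W) (phi : V -> W) :=
  (forall (c : R) x y, phi (c *: x + y) = c *: phi x + phi y) /\
  (forall x y, phi (brV x y) = brW (phi x) (phi y)).

(* (V, br, a) is (a realization of) M(A;G): the metabelian Lie R-algebra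
   presented by generators a_1..a_n and relations [a_p,a_q] = 0 for edges. *)
Definition is_MAG (R : pzRingType) (n : nat) (e : rel 'I_n) (V : lmodType R)
    (br : V -> V -> V) (a : 'I_n -> V) : Prop :=
  metabelian_lie br /\
  (forall p q, e p q -> br (a p) (a q) = 0) /\
  (forall P : V -> Prop, lie_subalg br P -> (forall i, P (a i)) -> forall x, P x) /\
  (forall (W : lmodType R) (brW : W -> W -> W) (f : 'I_n -> W),
      metabelian_lie brW ->
      (forall p q, e p q -> brW (f p) (f q) = 0) ->
      exists phi : V -> W, lie_hom br brW phi /\ forall i, phi (a i) = f i).

Definition mdeg (n : nat) := {ffun 'I_n -> nat}.
Definition mdeg_add (n : nat) (al be : mdeg n) : mdeg n := [ffun j => al j + be j].
Definition mdeg_unit (n : nat) (i : 'I_n) : mdeg n := [ffun j => nat_of_bool (j == i)].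

(* comp al h = the multi-homogeneous component of h of multi-degree al.
   Axioms: the components give a direct-sum decomposition of V into the
   submodules V_al = {x | comp al x = x}, with a_i of multi-degree e_i and
   [V_al, V_be] in V_(al+be).  (Such a grading exists on M(A;G) and is unique.) *)
Definition multigrading (R : pzRingType) (n : nat) (V : lmodType R)
    (br : V -> V -> V) (a : 'I_n -> V) (comp : mdeg n -> V -> V) : Prop :=
  (forall al (c : R) x y, comp al (c *: x + y) = c *: comp al x + comp al y) /\
  (forall al be x, comp al (comp be x) = if al == be then comp be x else 0) /\
  (forall h, exists s : seq (mdeg n),
      [/\ uniq s, (forall al, al \notin s -> comp al h = 0)
        & h = \sum_(al <- s) comp al h]) /\
  (forall i, comp (mdeg_unit i) (a i) = a i) /\
  (forall al be x y, comp al x = x -> comp be y = y ->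
      comp (mdeg_add al be) (br x y) = br x y).

Definition supp (R : pzRingType) (n : nat) (V : lmodType R)
    (comp : mdeg n -> V -> V) (h : V) (p : 'I_n) : Prop :=
  exists al : mdeg n, comp al h != 0 /\ (al p != 0)%N.

(* omega_1(h): sum of the components of length 1; multi-degrees of length 1
   are exactly the mdeg_unit i *)
Definition omega1 (R : pzRingType) (n : nat) (V : lmodType R)
    (comp : mdeg n -> V -> V) (h : V) : V :=
  \sum_(i < n) comp (mdeg_unit i) h.

Definition lie_direct_sum (R : pzRingType) (V : lmodType R) (br : V -> V -> V)
    (L1 L2 : V -> Prop) : Prop :=
  lie_subalg br L1 /\ lie_subalg br L2 /\
  (forall h, exists x1 x2, [/\ L1 x1, L2 x2 & h = x1 + x2]) /\
  (forall x, L1 x -> L2 x -> x = 0) /\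
  (forall x y, L1 x -> L2 y -> br x y = 0).

(* Main.v *)
Require Import Defs.
From HB Require Import structures.
From mathcomp Require Import all_boot all_order all_algebra zify ring.
Import GRing.Theory.
Local Open Scope ring_scope.
Set Implicit Arguments. Unset Strict Implicit.

Lemma addf0 (U W : zmodType) (f : U -> W) :
  (forall x y, f (x + y) = f x + f y) -> f 0 = 0.
Proof. move=> fD; have := fD 0 0; rewrite addr0 => /(congr1 (fun z => z - f 0)).
by rewrite subrr addrK => h; rewrite -h. Qed.

Lemma addf_sum (U W : zmodType) (f : U -> W) (I : Type) (s : seq I) (F : I -> U) :
  (forall x y, f (x + y) = f x + f y) ->
  f (\sum_(i <- s) F i) = \sum_(i <- s) f (F i).
Proof.
move=> fD; elim: s => [|x s IH]; first by rewrite !big_nil (addf0 fD).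
by rewrite !big_cons fD IH.
Qed.

Section BrLemmas.
Lemma brDl (R : pzRingType) (V : lmodType R) (br : V -> V -> V) :
  bilinear_br br -> forall x y z, br (x + y) z = br x z + br y z.
Proof. rewrite /bilinear_br => -[H1 _] x y z; by rewrite -{1}(scale1r x) H1 scale1r. Qed.
Lemma brDr (R : pzRingType) (V : lmodType R) (br : V -> V -> V) :
  bilinear_br br -> forall x y z, br z (x + y) = br z x + br z y.
Proof. rewrite /bilinear_br => -[_ H1] x y z; by rewrite -{1}(scale1r x) H1 scale1r. Qed.
Lemma brZl (R : pzRingType) (V : lmodType R) (br : V -> V -> V) :
  bilinear_br br -> forall c x z, br (c *: x) z = c *: br x z.
Proof. move=> H c x z; have := (proj1 H) c x 0 z.
by rewrite addr0 => ->; rewrite (addf0 (fun y w => brDl H y w z)) addr0. Qed.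
Lemma brZr (R : pzRingType) (V : lmodType R) (br : V -> V -> V) :
  bilinear_br br -> forall c x z, br z (c *: x) = c *: br z x.
Proof. move=> H c x z; have := (proj2 H) c x 0 z.
by rewrite addr0 => ->; rewrite (addf0 (fun y w => brDr H y w z)) addr0. Qed.
Lemma br0l (R : pzRingType) (V : lmodType R) (br : V -> V -> V) :
  bilinear_br br -> forall z, br 0 z = 0.
Proof. by move=> H z; rewrite (addf0 (fun y w => brDl H y w z)). Qed.
Lemma br0r (R : pzRingType) (V : lmodType R) (br : V -> V -> V) :
  bilinear_br br -> forall z, br z 0 = 0.
Proof. by move=> H z; rewrite (addf0 (fun y w => brDr H y w z)). Qed.
Lemma br_anti (R : pzRingType) (V : lmodType R) (br : V -> V -> V) :
  bilinear_br br -> (forall x, br x x = 0) -> forall x y, br x y = - br y x.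
Proof.
move=> H Ha x y; have := Ha (x + y).
rewrite (brDl H) !(brDr H) !Ha add0r addr0 => /eqP; rewrite addr_eq0 => /eqP //.
Qed.
End BrLemmas.

Definition msize n (al : mdeg n) : nat := (\sum_(j < n) al j)%N.

Lemma msize_add n (al be : mdeg n) : msize (mdeg_add al be) = (msize al + msize be)%N.
Proof. by rewrite /msize -big_split; apply: eq_bigr => j _; rewrite ffunE. Qed.

Lemma msize_unit n (i : 'I_n) : msize (mdeg_unit i) = 1%N.
Proof.
rewrite /msize (bigD1 i) //= big1 ?ffunE ?eqxx // => j /negPf Hj.
by rewrite ffunE Hj.
Qed.

Lemma unit_neq n (i j : 'I_n) : i != j -> mdeg_unit i != mdeg_unit j.
Proof.
move=> Hij; apply/eqP => /(congr1 (fun f : mdeg n => f i)).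
by rewrite !ffunE eqxx (negPf Hij).
Qed.

Inductive Cdeg (R : pzRingType) (n : nat) (V : lmodType R) (br : V -> V -> V)
   (a : 'I_n -> V) : nat -> V -> Prop :=
| Cgen i k : (k <= 1)%N -> Cdeg br a k (a i)
| Cbr p q k x y : Cdeg br a p x -> Cdeg br a q y -> (k <= p + q)%N -> Cdeg br a k (br x y)
| Cadd k x y : Cdeg br a k x -> Cdeg br a k y -> Cdeg br a k (x + y)
| Cscale k (c : R) x : Cdeg br a k x -> Cdeg br a k (c *: x)
| Czero k : Cdeg br a k 0.

Lemma Cdeg_mono (R : pzRingType) (n : nat) (V : lmodType R) (br : V -> V -> V)
   (a : 'I_n -> V) k x : Cdeg br a k x -> forall j, (j <= k)%N -> Cdeg br a j x.
Proof.
elim=> {k x}.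
- by move=> i k hk j hj; apply: Cgen; apply: leq_trans hk.
- move=> p q k x y _ IHx _ IHy hk j hj; apply: (Cbr (p:=p) (q:=q)).
  + by apply: IHx.
  + by apply: IHy.
  + exact: leq_trans hj hk.
- by move=> k x y _ IHx _ IHy j hj; apply: Cadd; [apply: IHx | apply: IHy].
- by move=> k c x _ IHx j hj; apply: Cscale; apply: IHx.
- by move=> k j _; apply: Czero.
Qed.

Section CompLemmas.
Variables (R : pzRingType) (n : nat) (V : lmodType R) (br : V -> V -> V)
   (a : 'I_n -> V) (comp : mdeg n -> V -> V).
Hypothesis Hg : multigrading br a comp.

Lemma compD al x y : comp al (x + y) = comp al x + comp al y.
Proof. by have [H _] := Hg; rewrite -{1}(scale1r x) H scale1r. Qed.
Lemma comp0 al : comp al 0 = 0.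
Proof. exact: (addf0 (compD al)). Qed.
Lemma compZ al c x : comp al (c *: x) = c *: comp al x.
Proof. by have [H _] := Hg; rewrite -(addr0 (c *: x)) H comp0 addr0. Qed.
Lemma compcomp al be x : comp al (comp be x) = if al == be then comp be x else 0.
Proof. by have [_ [H _]] := Hg. Qed.
Lemma compid al x : comp al (comp al x) = comp al x.
Proof. by rewrite compcomp eqxx. Qed.
Lemma comp_gen al i : al != mdeg_unit i -> comp al (a i) = 0.
Proof.
move=> hal; have [_ [_ [_ [Ha _]]]] := Hg.
by rewrite -(Ha i) compcomp (negPf hal).
Qed.
End CompLemmas.

Lemma Cdeg_comp (R : pzRingType) (n : nat) (V : lmodType R) (br : V -> V -> V)
   (a : 'I_n -> V) (comp : mdeg n -> V -> V) :
  bilinear_br br -> multigrading br a comp ->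
  forall k x, Cdeg br a k x -> forall al, (msize al < k)%N -> comp al x = 0.
Proof.
move=> Hb Hg k x; elim=> {k x}.
- move=> i k hk al hal; apply: (comp_gen Hg); apply/eqP => E.
  by move: hal; rewrite E msize_unit; case: k hk => [|[]].
- move=> p q k x y _ IHx _ IHy hk al hal.
  have [_ [_ [Hdec [_ Hbr]]]] := Hg.
  have [s [_ _ Hx]] := Hdec x; have [t [_ _ Hy]] := Hdec y.
  rewrite Hx Hy.
  rewrite (addf_sum _ _ (fun u v => brDl Hb u v _)).
  rewrite (addf_sum _ _ (compD Hg al)); apply: big1 => be _.
  rewrite (addf_sum _ _ (fun u v => brDr Hb u v _)).
  rewrite (addf_sum _ _ (compD Hg al)); apply: big1 => ga _.
  have E := Hbr be ga _ _ (compid Hg be x) (compid Hg ga y).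
  rewrite -E (compcomp Hg).
  case: eqP => [Eal|] //.
  move: hal; rewrite Eal msize_add => hal.
  have [h1|h1] := ltnP (msize be) p.
    by rewrite E (IHx be h1) (br0l Hb).
  have h2 : (msize ga < q)%N.
    rewrite -(ltn_add2l (msize be)); apply: (leq_trans hal); apply: (leq_trans hk).
    by rewrite leq_add2r.
  by rewrite E (IHy ga h2) (br0r Hb).
- by move=> k x y _ IHx _ IHy al hal; rewrite (compD Hg) IHx ?IHy ?addr0.
- by move=> k c x _ IHx al hal; rewrite (compZ Hg) IHx ?scaler0.
- by move=> k al _; rewrite (comp0 Hg).
Qed.

Section Gen.
Variables (R : pzRingType) (n : nat) (e : rel 'I_n) (V : lmodType R) (br : V -> V -> V)
   (a : 'I_n -> V).
Hypothesis HM : is_MAG e br a.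

Lemma C1_all x : Cdeg br a 1 x.
Proof.
have [_ [_ [Hgen _]]] := HM; apply: Hgen => [|i]; last by apply: Cgen.
split; first exact: Czero.
split; first by move=> u v; apply: Cadd.
split; first by move=> c u; apply: Cscale.
by move=> u v hu hv; apply: (Cbr hu hv).
Qed.

Lemma decomp x : exists (r : 'I_n -> R) c, Cdeg br a 2 c /\ x = \sum_j r j *: a j + c.
Proof.
have [_ [_ [Hgen _]]] := HM; move: x.
apply: (Hgen (fun x => exists (r : 'I_n -> R) c, Cdeg br a 2 c /\ x = \sum_j r j *: a j + c)) => [|i].
  split.
    exists (fun _ => 0), 0; split; first exact: Czero.
    by rewrite big1 ?addr0 // => j _; rewrite scale0r.
  split.
    move=> u v [r [c [hc ->]]] [r' [c' [hc' ->]]].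
    exists (fun j => r j + r' j), (c + c'); split; first exact: Cadd.
    rewrite addrACA -big_split /=; congr (_ + _); apply: eq_bigr => j _.
    by rewrite scalerDl.
  split.
    move=> c0 u [r [c [hc ->]]].
    exists (fun j => c0 * r j), (c0 *: c); split; first exact: Cscale.
    by rewrite scalerDr scaler_sumr; congr (_ + _); apply: eq_bigr => j _; rewrite scalerA.
  move=> u v _ _; exists (fun _ => 0), (br u v); split; first exact: (Cbr (C1_all u) (C1_all v)).
  by rewrite big1 ?add0r // => j _; rewrite scale0r.
exists (fun j => (j == i)%:R), 0; split; first exact: Czero.
rewrite addr0 (bigD1 i) //= eqxx scale1r big1 ?addr0 // => j /negPf ->.
by rewrite scale0r.
Qed.
End Gen.

Section Proj.
Variables (R : pzRingType) (n : nat) (V : lmodType R) (br : V -> V -> V)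
   (a : 'I_n -> V) (L1 L2 : V -> Prop) (g : 'I_n -> V).
Hypothesis Hb : bilinear_br br.
Hypothesis Halt : forall x, br x x = 0.
Hypothesis HL : lie_direct_sum br L1 L2.
Hypothesis Hg : forall i, [/\ L1 (a i + g i), L2 (- g i) & Cdeg br a 2 (- g i)].

Lemma proj2_deg k x : Cdeg br a k x ->
  exists x2, [/\ L2 x2, L1 (x - x2) & Cdeg br a (k + k) x2].
Proof.
have [[L10 [L1D [L1Z L1B]]] [[L20 [L2D [L2Z L2B]]] [_ [_ H12]]]] := HL.
elim=> {k x}.
- move=> i k hk; have [h1 h2 h3] := Hg i; exists (- g i); split => //.
    by rewrite opprK.
  by apply: (Cdeg_mono h3); case: k hk => [|[]].
- move=> p q k x y _ [x2 [hx2 hx1 hxC]] _ [y2 [hy2 hy1 hyC]] hk.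
  exists (br x2 y2); split.
  + exact: L2B.
  + have -> : br x y - br x2 y2 = br (x - x2) (y - y2).
      have key : forall u w, L1 u -> L1 w -> br (u + x2) (w + y2) - br x2 y2 = br u w.
        move=> u w hu hw.
        rewrite (brDl Hb) !(brDr Hb) (H12 _ _ hu hy2).
        rewrite (br_anti Hb Halt x2 w) (H12 _ _ hw hx2) oppr0 add0r addr0.
        by rewrite addrK.
      by rewrite -(key (x - x2) (y - y2)) // !subrK.
    exact: L1B.
  + apply: (Cbr hxC hyC); rewrite addnACA; exact: leq_add.
- move=> k x y _ [x2 [hx2 hx1 hxC]] _ [y2 [hy2 hy1 hyC]].
  exists (x2 + y2); split; [exact: L2D | | exact: Cadd].
  by rewrite opprD addrACA; apply: L1D.
- move=> k c x _ [x2 [hx2 hx1 hxC]]; exists (c *: x2); split; [exact: L2Z| |exact: Cscale].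
  by rewrite -scalerBr; apply: L1Z.
- move=> k; exists 0; split => //; [by rewrite subr0 | exact: Czero].
Qed.

Lemma L2_deg k x : L2 x -> Cdeg br a k x -> Cdeg br a (k + k) x.
Proof.
have [[L10 [L1D [L1Z L1B]]] [[L20 [L2D [L2Z L2B]]] [_ [H0 H12]]]] := HL.
move=> hx /proj2_deg [x2 [h2 h1 hC]].
suff -> : x = x2 by [].
apply/eqP; rewrite -subr_eq0; apply/eqP; apply: H0 => //.
rewrite -scaleN1r; apply: L2D => //; exact: L2Z.
Qed.

Lemma L2_all x : L2 x -> Cdeg br a 2 x -> forall m, Cdeg br a m.+2 x.
Proof.
move=> hx hC; elim=> // m IH; apply: (Cdeg_mono (L2_deg hx IH)).
lia.
Qed.
End Proj.

Section Model.
Variables (R : idomainType) (n : nat) (k l : 'I_n).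
Definition Wt := ('rV[R]_n * 'rV[R]_1)%type.
Definition brW (u v : Wt) : Wt :=
  (0, const_mx (u.1 0 k * v.1 0 l - u.1 0 l * v.1 0 k)).

Lemma brW_met : metabelian_lie brW.
Proof.
split; [split|split; [|split]].
- move=> c [x s] [y t] [z w]; rewrite /brW /=.
  apply/eqP; rewrite xpair_eqE /= scaler0 addr0 eqxx /=; apply/eqP.
  apply/matrixP => i j; rewrite !mxE; ring.
- move=> c [x s] [y t] [z w]; rewrite /brW /=.
  apply/eqP; rewrite xpair_eqE /= scaler0 addr0 eqxx /=; apply/eqP.
  apply/matrixP => i j; rewrite !mxE; ring.
- move=> [x s]; rewrite /brW /= mulrC subrr.
  by apply/eqP; rewrite xpair_eqE /= eqxx /=; apply/eqP/matrixP => i j; rewrite !mxE.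
- move=> x y z; rewrite /brW /=.
  apply/eqP; rewrite xpair_eqE /= !addr0 eqxx /=; apply/eqP.
  apply/matrixP => i j; rewrite !mxE; ring.
- move=> x y z t; rewrite /brW /=.
  apply/eqP; rewrite xpair_eqE /= eqxx /=; apply/eqP.
  apply/matrixP => i j; rewrite !mxE; ring.
Qed.
End Model.

Lemma psi_ex (R : idomainType) n (e : rel 'I_n) (V : lmodType R) (br : V -> V -> V)
  (a : 'I_n -> V) : is_MAG e br a -> simple_graph e -> forall k l : 'I_n, ~~ e k l ->
  exists psi : V -> Wt R n, lie_hom br (brW k l) psi /\ forall i, psi (a i) = (delta_mx 0 i, 0).
Proof.
move=> HM [_ Hsym] k l Hkl.
have [_ [_ [_ U]]] := HM; apply: U; first exact: brW_met.
move=> p q hpq; rewrite /brW /=.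
apply/eqP; rewrite xpair_eqE eqxx /=; apply/eqP/matrixP => i j; rewrite !mxE /=.
have [Ekp|nkp] := eqVneq k p; have [Elq|nlq] := eqVneq l q;
  have [Elp|nlp] := eqVneq l p; have [Ekq|nkq] := eqVneq k q;
  rewrite ?mul1r ?mul0r ?mulr0 ?subrr ?subr0 //.
all: subst; try by rewrite hpq in Hkl.
all: by rewrite Hsym hpq in Hkl.
Qed.

Section Psi.
Variables (R : idomainType) (n : nat) (V : lmodType R) (br : V -> V -> V)
  (a : 'I_n -> V) (k l : 'I_n) (psi : V -> Wt R n).
Hypothesis Hpsi : lie_hom br (brW k l) psi.
Hypothesis Ha : forall i, psi (a i) = (delta_mx 0 i, 0).

Lemma psiD x y : psi (x + y) = psi x + psi y.
Proof. by have [H _] := Hpsi; rewrite -{1}(scale1r x) H scale1r. Qed.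
Lemma psi0 : psi 0 = 0.
Proof. exact: (addf0 psiD). Qed.
Lemma psiZ c x : psi (c *: x) = c *: psi x.
Proof. by have [H _] := Hpsi; rewrite -(addr0 (c *: x)) H psi0 addr0. Qed.
Lemma psiB x y : psi (br x y) = brW k l (psi x) (psi y).
Proof. by have [_ H] := Hpsi. Qed.

Lemma psi_C2 m c : Cdeg br a m c -> (2 <= m)%N -> (psi c).1 = 0.
Proof.
elim=> {m c}.
- by move=> i m hm hm2; move: (leq_trans hm2 hm).
- by move=> p q m x y _ _ _ _ _ _; rewrite psiB.
- by move=> m x y _ IHx _ IHy hm; rewrite psiD /= IHx ?IHy ?addr0.
- by move=> m c x _ IHx hm; rewrite psiZ /= IHx ?scaler0.
- by move=> m _; rewrite psi0.
Qed.

Lemma psi_dec (r : 'I_n -> R) c j : Cdeg br a 2 c ->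
  (psi (\sum_i r i *: a i + c)).1 0 j = r j.
Proof.
move=> hc; rewrite psiD /= (psi_C2 hc) // addr0.
rewrite (addf_sum _ _ psiD).
rewrite (addf_sum _ _ (fun u v : Wt R n => erefl (u + v).1)).
rewrite summxE (bigD1 j) //= psiZ Ha /= !mxE !eqxx /= mulr1 big1 ?addr0 // => i /negPf hij.
by rewrite psiZ Ha /= !mxE eq_sym hij andbF mulr0.
Qed.
End Psi.

Unset Implicit Arguments.

Theorem lemma6 (R : idomainType) (n : nat) (e : rel 'I_n)
    (V : lmodType R) (br : V -> V -> V) (a : 'I_n -> V)
    (comp : mdeg n -> V -> V) (L1 L2 : V -> Prop) (g : 'I_n -> V) :
  (2 <= n)%N ->
  simple_graph e ->
  compl_connected e ->
  is_MAG e br a ->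
  multigrading br a comp ->
  lie_direct_sum br L1 L2 ->
  (* (a_i)_1 = a_i + g_i and (a_i)_2 = - g_i, with a_i not in supp(omega_1(g_i)) *)
  (forall i, [/\ L1 (a i + g i), L2 (- g i) & ~ supp comp (omega1 comp (g i)) i]) ->
  forall i, g i = 0.
Proof.
move=> Hn HS Hconn HM Hgr HL Hg.
have [[Hb [Halt _]] _] := HM.
have [[L10 [L1D [L1Z L1B]]] [[L20 [L2D [L2Z L2B]]] [_ [H0 H12]]]] := HL.
have [Hirr Hsym] := HS.
have HA : forall i, comp (mdeg_unit i) (g i) = 0.
  move=> i; have [_ _ hs] := Hg i; apply/eqP; apply: contraT => hne; exfalso; apply: hs.
  exists (mdeg_unit i); split; last by rewrite ffunE eqxx.
  rewrite /omega1 (addf_sum _ _ (compD Hgr _)) (bigD1 i) //= (compid Hgr) big1 ?addr0 // => j hj.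
  rewrite (compcomp Hgr) ifF //; apply/negbTE/unit_neq; by rewrite eq_sym.
have Hgen : forall k, comp (mdeg_unit k) (a k) = a k by have [_ [_ [_ [H _]]]] := Hgr.
have Hrkk : forall k r c, Cdeg br a 2 c -> g k = \sum_j r j *: a j + c -> r k = 0.
  move=> k r c hc Ek.
  have : comp (mdeg_unit k) (g k) = r k *: a k.
    rewrite Ek (compD Hgr) (Cdeg_comp Hb Hgr hc) ?msize_unit // addr0.
    rewrite (addf_sum _ _ (compD Hgr _)) (bigD1 k) //= (compZ Hgr) Hgen big1 ?addr0 // => j hj.
    by rewrite (compZ Hgr) (comp_gen Hgr) ?scaler0 // unit_neq // eq_sym.
  rewrite HA => /esym h0.
  have [psi [Hpsi Hpa]] := psi_ex HM HS (Hirr k).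
  have := congr1 (fun x => (psi x).1 0 k) h0.
  by rewrite (psiZ Hpsi) Hpa (psi0 Hpsi) /= !mxE !eqxx /= mulr1.
have Hnb : forall l : 'I_n, exists k, compl_graph e l k.
  move=> l; have h0 : (0 < n)%N by lia.
  have h1 : (1 < n)%N by lia.
  have [k0 hk0] : exists k0 : 'I_n, k0 != l.
    case: (eqVneq (Ordinal h0) l) => [E|]; last by exists (Ordinal h0).
    by exists (Ordinal h1); rewrite -E; apply/eqP => /(f_equal (@nat_of_ord _)).
  case/connectP: (Hconn l k0) => p.
  case: p => [|z p] /=.
    by move=> _ E; rewrite E eqxx in hk0.
  by case/andP => hz _ _; exists z.
have Hr0 : forall j r c, Cdeg br a 2 c -> g j = \sum_i r i *: a i + c -> forall l, r l = 0.
  move=> j r c hc Ej l.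
  have [k] := Hnb l; rewrite /compl_graph => /andP [nlk nelk].
  have nekl : ~~ e k l by rewrite Hsym.
  have [psi [Hpsi Hpa]] := psi_ex HM HS nekl.
  have [rk [ck [hck Ek]]] := decomp HM (g k).
  have rkk := Hrkk k rk ck hck Ek.
  have key : forall j' r' c', Cdeg br a 2 c' -> g j' = \sum_i r' i *: a i + c' ->
      - r' l + rk l * r' k = 0.
    move=> j' r' c' hc' Ej'.
    have [hk1 _ _] := Hg k; have [_ hj2 _] := Hg j'.
    have h := H12 _ _ hk1 hj2.
    have v1 : forall m, (psi (a k + g k)).1 0 m = (k == m)%:R + rk m.
      move=> m; rewrite (psiD Hpsi) /= mxE Hpa /= !mxE eqxx /= Ek (psi_dec Hpsi Hpa) 1?eq_sym //.
    have v2 : forall m, (psi (- g j')).1 0 m = - r' m.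
      move=> m; rewrite -scaleN1r (psiZ Hpsi) /= mxE Ej' (psi_dec Hpsi Hpa) ?mulN1r //.
    have := congr1 (fun x => (psi x).2 0 0) h.
    rewrite (psiB Hpsi) (psi0 Hpsi) /= !mxE v1 v1 v2 v2 eqxx rkk.
    have -> : (k == l) = false by apply/negbTE; rewrite eq_sym.
    move=> H; rewrite -[RHS]H /=; ring.
  have rkl : rk l = 0.
    by have := key k rk ck hck Ek; rewrite rkk mulr0 addr0 => /eqP; rewrite oppr_eq0 => /eqP.
  by have := key j r c hc Ej; rewrite rkl mul0r addr0 => /eqP; rewrite oppr_eq0 => /eqP.
have HgC : forall j, Cdeg br a 2 (- g j).
  move=> j; have [r [c [hc Ej]]] := decomp HM (g j).
  have -> : g j = c by rewrite Ej big1 ?add0r // => i _; rewrite (Hr0 j r c hc Ej i) scale0r.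
  rewrite -scaleN1r; exact: Cscale.
have Hg' : forall i, [/\ L1 (a i + g i), L2 (- g i) & Cdeg br a 2 (- g i)].
  by move=> i; have [? ? _] := Hg i; split.
move=> j; have [_ hj2 _] := Hg j.
have hall := L2_all Hb Halt HL Hg' hj2 (HgC j).
have Hz : forall al, comp al (- g j) = 0.
  by move=> al; apply: (Cdeg_comp Hb Hgr (hall (msize al))); lia.
have [_ [_ [Hdec _]]] := Hgr.
have [s [_ _ Hs]] := Hdec (- g j).
apply/eqP; rewrite -oppr_eq0; apply/eqP; rewrite Hs big1 // => al _; exact: Hz.
Qed.
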